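(* There exist Archimedean vector lattices $X,Y$ and a disjointness preserving linear operator $T:X\to Y$ that does not satisfy condition $(\beta)$.
   Context: For a subset $A$ of a vector lattice $X$, $A^d=\{x\in X: |x|\wedge|a|=0 \text{ for all } a\in A\}$ and $A^{dd}=(A^d)^d$. For $a,b\in X$ we write $a\lhd b$ if $\{a\}^{dd}\subseteq\{b\}^{dd}$. A linear operator $T:X\to Y$ satisfies condition $(\beta)$ if $Ta\lhd Tb$ in $Y$ whenever $a\lhd b$ in $X$. A linear operator is disjointness preserving if it maps disjoint elements to disjoint elements. *)

(* Defs.v *)
From Stdlib Require Import Reals.
Open Scope R_scope.

Record VectorLattice := {
  vl_carrier :> Type;
  vzero : vl_carrier;
  vadd : vl_carrier -> vl_carrier -> vl_carrier;
  vopp : vl_carrier -> vl_carrier;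
  vscal : R -> vl_carrier -> vl_carrier;
  vle : vl_carrier -> vl_carrier -> Prop;
  vsup : vl_carrier -> vl_carrier -> vl_carrier;
  vinf : vl_carrier -> vl_carrier -> vl_carrier;
  vaddA : forall x y z, vadd x (vadd y z) = vadd (vadd x y) z;
  vaddC : forall x y, vadd x y = vadd y x;
  vadd0 : forall x, vadd vzero x = x;
  vaddN : forall x, vadd x (vopp x) = vzero;
  vscal_addv : forall a x y, vscal a (vadd x y) = vadd (vscal a x) (vscal a y);
  vscal_adds : forall a b x, vscal (a + b) x = vadd (vscal a x) (vscal b x);
  vscal_mul : forall a b x, vscal (a * b) x = vscal a (vscal b x);
  vscal_one : forall x, vscal 1 x = x;
  vle_refl : forall x, vle x x;
  vle_antisym : forall x y, vle x y -> vle y x -> x = y;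
  vle_trans : forall x y z, vle x y -> vle y z -> vle x z;
  vle_add : forall x y z, vle x y -> vle (vadd x z) (vadd y z);
  vle_scal : forall a x y, 0 <= a -> vle x y -> vle (vscal a x) (vscal a y);
  vsup_l : forall x y, vle x (vsup x y);
  vsup_r : forall x y, vle y (vsup x y);
  vsup_least : forall x y z, vle x z -> vle y z -> vle (vsup x y) z;
  vinf_l : forall x y, vle (vinf x y) x;
  vinf_r : forall x y, vle (vinf x y) y;
  vinf_greatest : forall x y z, vle z x -> vle z y -> vle z (vinf x y)
}.

Arguments vzero {v}.
Arguments vadd {v}.
Arguments vopp {v}.
Arguments vscal {v}.
Arguments vle {v}.
Arguments vsup {v}.
Arguments vinf {v}.

Definition vabs {X : VectorLattice} (x : X) : X := vsup x (vopp x).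

Definition archimedean (X : VectorLattice) : Prop :=
  forall x y : X, vle vzero x -> (forall n : nat, vle (vscal (INR n) x) y) -> x = vzero.

Definition disjoint {X : VectorLattice} (x y : X) : Prop :=
  vinf (vabs x) (vabs y) = vzero.

Definition dcompl {X : VectorLattice} (A : X -> Prop) : X -> Prop :=
  fun x => forall a, A a -> disjoint x a.

Definition band_gen {X : VectorLattice} (a : X) : X -> Prop :=
  dcompl (dcompl (fun z => z = a)).

Definition lhd {X : VectorLattice} (a b : X) : Prop :=
  forall x, band_gen a x -> band_gen b x.

Definition linear_op {X Y : VectorLattice} (T : X -> Y) : Prop :=
  (forall x y, T (vadd x y) = vadd (T x) (T y)) /\
  (forall (c : R) x, T (vscal c x) = vscal c (T x)).

Definition disjointness_preserving {X Y : VectorLattice} (T : X -> Y) : Prop :=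
  forall x y, disjoint x y -> disjoint (T x) (T y).

Definition condition_beta {X Y : VectorLattice} (T : X -> Y) : Prop :=
  forall a b, lhd a b -> lhd (T a) (T b).

(* Main.v *)
Require Import Defs.
From Stdlib Require Import Reals Lra Lia ProofIrrelevance FunctionalExtensionality.
Open Scope R_scope.

Record CS := mkCS { sq : nat -> R; lm : R; cv : Un_cv sq lm }.

Lemma eqCS (p q : CS) : (forall n, sq p n = sq q n) -> p = q.
Proof.
  destruct p as [f L H], q as [g M K]; simpl; intro E.
  assert (f = g) by (apply functional_extensionality; auto). subst g.
  assert (L = M) by (eapply UL_sequence; eauto). subst M.
  f_equal; apply proof_irrelevance.
Qed.

Lemma cv_const (a : R) : Un_cv (fun _ => a) a.
Proof. intros e He; exists 0%nat; intros; unfold R_dist; rewrite Rminus_diag, Rabs_R0; lra. Qed.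

Lemma max_bound a b c d : Rabs (Rmax a b - Rmax c d) <= Rmax (Rabs (a - c)) (Rabs (b - d)).
Proof. unfold Rmax, Rabs; repeat (destruct Rle_dec || destruct Rcase_abs); lra. Qed.
Lemma min_bound a b c d : Rabs (Rmin a b - Rmin c d) <= Rmax (Rabs (a - c)) (Rabs (b - d)).
Proof. unfold Rmin, Rmax, Rabs; repeat (destruct Rle_dec || destruct Rcase_abs); lra. Qed.

Lemma cv_max f g L M : Un_cv f L -> Un_cv g M -> Un_cv (fun n => Rmax (f n) (g n)) (Rmax L M).
Proof.
  intros Hf Hg e He. destruct (Hf e He) as [N1 H1]. destruct (Hg e He) as [N2 H2].
  exists (max N1 N2); intros n Hn. unfold R_dist in *.
  eapply Rle_lt_trans; [apply max_bound|].
  apply Rmax_lub_lt; [apply H1|apply H2]; lia.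
Qed.
Lemma cv_min f g L M : Un_cv f L -> Un_cv g M -> Un_cv (fun n => Rmin (f n) (g n)) (Rmin L M).
Proof.
  intros Hf Hg e He. destruct (Hf e He) as [N1 H1]. destruct (Hg e He) as [N2 H2].
  exists (max N1 N2); intros n Hn. unfold R_dist in *.
  eapply Rle_lt_trans; [apply min_bound|].
  apply Rmax_lub_lt; [apply H1|apply H2]; lia.
Qed.

Definition cz : CS := mkCS (fun _ => 0) 0 (cv_const 0).
Definition cadd (p q : CS) : CS :=
  mkCS (fun n => sq p n + sq q n) (lm p + lm q) (CV_plus _ _ _ _ (cv p) (cv q)).
Definition copp (p : CS) : CS := mkCS (fun n => - sq p n) (- lm p) (CV_opp _ _ (cv p)).
Definition cscal (a : R) (p : CS) : CS :=
  mkCS (fun n => a * sq p n) (a * lm p) (CV_mult _ _ _ _ (cv_const a) (cv p)).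
Definition csup (p q : CS) : CS :=
  mkCS (fun n => Rmax (sq p n) (sq q n)) (Rmax (lm p) (lm q)) (cv_max _ _ _ _ (cv p) (cv q)).
Definition cinf (p q : CS) : CS :=
  mkCS (fun n => Rmin (sq p n) (sq q n)) (Rmin (lm p) (lm q)) (cv_min _ _ _ _ (cv p) (cv q)).
Definition cle (p q : CS) : Prop := forall n, sq p n <= sq q n.

Definition Xc : VectorLattice.
Proof.
  refine (Build_VectorLattice CS cz cadd copp cscal cle csup cinf
    _ _ _ _ _ _ _ _ _ _ _ _ _ _ _ _ _ _ _);
  intros; try (apply eqCS; intros; simpl; ring);
  unfold cle in *; simpl in *; intros;
  try (apply eqCS; intros; apply Rle_antisym; auto);
  try (apply Rmax_l); try (apply Rmax_r); try (apply Rmin_l); try (apply Rmin_r);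
  try (apply Rmax_lub; auto); try (apply Rmin_glb; auto);
  try (apply Rmult_le_compat_l; auto);
  try solve [eauto using Rle_trans]; try (apply Rplus_le_compat_r; auto);
  try apply Rle_refl.
Defined.

Definition Yr : VectorLattice.
Proof.
  refine (Build_VectorLattice R 0 Rplus Ropp Rmult Rle Rmax Rmin
    _ _ _ _ _ _ _ _ _ _ _ _ _ _ _ _ _ _ _); intros;
  try ring; try lra;
  try (apply Rmax_l); try (apply Rmax_r); try (apply Rmin_l); try (apply Rmin_r);
  try (apply Rmax_lub; auto); try (apply Rmin_glb; auto);
  try (apply Rmult_le_compat_l; auto).
Defined.

Lemma archR (x y : R) : 0 <= x -> (forall n : nat, INR n * x <= y) -> x = 0.
Proof.
  intros Hx H. destruct (Req_dec x 0) as [|Hne]; auto.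
  assert (x > 0) by lra.
  destruct (INR_unbounded (y / x)) as [n Hn].
  specialize (H n).
  assert (y / x * x = y) by (field; lra).
  assert (INR n * x > y / x * x) by (apply Rmult_gt_compat_r; lra). lra.
Qed.

Theorem mainTheorem5 :
  exists (X Y : VectorLattice) (T : X -> Y),
    archimedean X /\ archimedean Y /\ linear_op T /\
    disjointness_preserving T /\ ~ condition_beta T.
Proof.
  exists Xc, Yr, (lm : Xc -> Yr).
  split; [|split; [|split; [|split]]].
  - intros x y Hx H. apply eqCS; intro n. simpl.
    apply (archR _ (sq y n)); [apply Hx|]. intro m. apply (H m).
  - intros x y Hx H. apply (archR x y); auto.
  - split; reflexivity.
  - intros x y H. unfold disjoint in *. apply (f_equal lm) in H. exact H.
  - intro Hb.
    set (a := cz).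
    pose (one := mkCS (fun _ => 1) 1 (cv_const 1) : Xc).
    pose (b := mkCS (fun n => 1 / 2 ^ n) 0 (cv_pow_half 1) : Xc).
    assert (Hl : lhd one b).
    { intros x _ z Hz.
      assert (Hz0 : forall n, sq z n = 0).
      { intro n. specialize (Hz b eq_refl). unfold disjoint in Hz.
        apply (f_equal (fun p : Xc => sq p n)) in Hz. simpl in Hz.
        assert (0 < 1 / 2 ^ n) by (apply Rdiv_lt_0_compat; [lra| apply pow_lt; lra]).
        revert Hz; unfold Rmin, Rmax; repeat destruct Rle_dec; lra. }
      unfold disjoint. apply eqCS; intro n. simpl. rewrite Hz0.
      unfold Rmin, Rmax; repeat destruct Rle_dec; lra. }
    specialize (Hb _ _ Hl). simpl in Hb.
    assert (H1 : band_gen (1 : Yr) 1).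
    { intros z Hz. specialize (Hz 1 eq_refl). unfold disjoint, vabs in *. simpl in *.
      revert Hz; unfold Rmin, Rmax; repeat destruct Rle_dec; lra. }
    specialize (Hb 1 H1 1).
    assert (H2 : dcompl (fun z : Yr => z = 0) 1).
    { intros z ->. unfold disjoint, vabs; simpl.
      unfold Rmin, Rmax; repeat destruct Rle_dec; lra. }
    specialize (Hb H2). unfold disjoint, vabs in Hb; simpl in Hb.
    revert Hb; unfold Rmin, Rmax; repeat destruct Rle_dec; lra.
Qed.
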